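(* Let $D\ge2$ be square-free, $K=\mathbb{Q}(\sqrt D)$ with ring of integers $\mathbb{Z}_K$, and let $u_D$ be defined as follows: fix the real embedding with $\sqrt D>0$, let $u_f$ be the fundamental unit of $K$ that is $>1$ under it, and set $u_D=u_f^2$ if $u_f$ has norm $-1$ and $u_D=u_f$ otherwise. For $r\ge1$ let $d_r=1+u_D^r+u_D^{-r}\in\mathbb{Z}$, and let $d_r'=d_r$ if $d_r$ is odd and $d_r'=2d_r$ if $d_r$ is even. Then the multiplicative order of $u_D$ in $(\mathbb{Z}_K/d_r'\mathbb{Z}_K)^\times$ is $3r\,\frac{d_r'}{d_r}$; that is, it is $3r$ if $d_r$ is odd and $6r$ if $d_r$ is even. *)

(* Defs.v *)
(* The real quadratic field Q(sqrt D) is realised inside a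
   real closed field R (so sqrt D > 0: the chosen real embedding). *)
From HB Require Import structures.
From mathcomp Require Import all_boot all_order all_algebra.
Set Implicit Arguments. Unset Strict Implicit. Unset Printing Implicit Defensive.
Import Order.TTheory GRing.Theory Num.Theory.
Local Open Scope ring_scope.

Definition squarefree (D : nat) : Prop :=
  forall m : nat, (1 < m)%N -> ~~ (m * m %| D)%N.

Section QuadField.
Variables (R : rcfType) (D : nat).

Definition sqD : R := Num.sqrt (D%:R).

Definition inK (x : R) : Prop :=
  exists p q : rat, x = ratr p + ratr q * sqD.

Definition alg_int (x : R) : Prop :=
  exists P : {poly int}, P \is monic /\ root (map_poly (intr : int -> R) P) x.

Definition inZK (x : R) : Prop := inK x /\ alg_int x.

Definition unitZK (x : R) : Prop := inZK x /\ x != 0 /\ inZK x^-1.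

Definition normK_is (x : R) (n : rat) : Prop :=
  exists p q : rat, x = ratr p + ratr q * sqD /\ p ^+ 2 - D%:R * q ^+ 2 = n.

Definition fundamental_unit (u : R) : Prop :=
  unitZK u /\ 1 < u /\
  forall v : R, unitZK v -> exists k : int, v = u ^ k \/ v = - u ^ k.

Definition is_uD (uD : R) : Prop :=
  exists uf : R, fundamental_unit uf /\
    ((normK_is uf (-1) /\ uD = uf ^+ 2) \/ (~ normK_is uf (-1) /\ uD = uf)).

(* x = y in Z_K / n Z_K  (for x, y in Z_K) *)
Definition congZK (n : int) (x y : R) : Prop := inZK ((x - y) / n%:~R).

Definition mod_order (x : R) (n : int) (k : nat) : Prop :=
  (0 < k)%N /\ congZK n (x ^+ k) 1 /\
  forall j : nat, (0 < j)%N -> (j < k)%N -> ~ congZK n (x ^+ j) 1.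

End QuadField.

(* Main.v *)
Require Import Defs.
From HB Require Import structures.
From mathcomp Require Import all_boot all_order all_algebra.
From mathcomp Require Import ring lra zify.
Set Implicit Arguments. Unset Strict Implicit. Unset Printing Implicit Defensive.
Import Order.TTheory GRing.Theory Num.Theory.
Local Open Scope ring_scope.

Lemma sqfree_den (D : nat) (s : rat) (K : int) :
  squarefree D -> D%:R * s ^+ 2 = K%:~R -> denq s = 1.
Proof.
move=> sqD eq.
have hc := denq_gt0 s.
set n := numq s in eq *; set c := denq s in hc eq *.
have se : s = n%:~R / c%:~R by rewrite divq_num_den.
have cz : (c%:~R : rat) != 0 by rewrite intr_eq0 gt_eqF.
have eqi : (D%:R * n ^+ 2 = K * c ^+ 2 :> int).
  apply: (@intr_inj rat); rewrite !rmorphM /=.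
  rewrite -eq se pmulrn intz; field; done.
have /(congr1 absz) := eqi; rewrite !abszM /= natz /= !mulnn => eqn.
have dv : (`|c| ^ 2 %| D)%N.
  have cop : coprime (`|c| ^ 2) (`|n| ^ 2).
    by rewrite coprimeXl // coprimeXr // coprime_sym coprime_num_den.
  by rewrite -(Gauss_dvdr _ cop) mulnC eqn dvdn_mull.
have : (`|c| <= 1)%N.
  rewrite leqNgt; apply/negP => lt1; have := sqD _ lt1.
  by rewrite mulnn dv.
clearbody c n; clear -hc; move: hc; case: c => // [[|[|k]]] //.
Qed.

Lemma int_unit_sq (l l' : int) : l * l' = 1 -> l * l = 1.
Proof.
move=> /(congr1 absz); rewrite abszM /= => /eqP; rewrite muln_eq1 => /andP[/eqP h _].
by case: l h => [[|[|k]]|[|k]].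
Qed.

Local Notation pZtoQ := (map_poly (intr : int -> rat)).

Lemma monic_dvd_int (m : {poly rat}) (P : {poly int}) :
  m \is monic -> P \is monic -> m %| pZtoQ P ->
  exists m1 : {poly int}, m = pZtoQ m1.
Proof.
move=> mm mP /dvdpP_rat_int [p1 [a a0 me] [r Pe]].
have l1 : lead_coef p1 * lead_coef p1 = 1.
  apply: (@int_unit_sq _ (lead_coef r)); rewrite -lead_coefM -Pe.
  exact/eqP.
have ha : a * (lead_coef p1)%:~R = 1.
  have := monicP mm; rewrite me lead_coefZ lead_coef_map_inj //.
  exact: intr_inj.
have ae : a = (lead_coef p1)%:~R.
  have -> : a = a * (lead_coef p1 * lead_coef p1)%:~R by rewrite l1 mulr1.
  by rewrite intrM mulrA ha mul1r.
exists (lead_coef p1 *: p1); by rewrite me ae map_polyZ.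
Qed.

Section Quad.
Variables (R : rcfType) (D : nat).
Hypotheses (D2 : (2 <= D)%N) (sqf : squarefree D).
Local Notation s := (sqD R D).

Lemma sqD2 : s ^+ 2 = D%:R.
Proof. by rewrite /sqD sqr_sqrtr // ler0n. Qed.

Lemma ratr_injR : injective (ratr : rat -> R).
Proof. exact: fmorph_inj. Qed.

Lemma int_of_den (x : rat) : denq x = 1 -> x = (numq x)%:~R.
Proof. by move=> h; rewrite numqE h mulr1. Qed.

Lemma irr (a b : rat) : ratr a + ratr b * s = 0 -> a = 0 /\ b = 0.
Proof.
have [->|b0] := eqVneq b 0.
  rewrite rmorph0 mul0r addr0 => /eqP; rewrite fmorph_eq0 => /eqP -> //.
move=> h; exfalso.
pose t := - a / b.
have st : s = ratr t.
  rewrite /t fmorph_div rmorphN /=; apply: (canRL (mulfK _)); first by rewrite fmorph_eq0.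
  by rewrite mulrC; apply/eqP; rewrite -subr_eq0 opprK addrC h.
have tD : t ^+ 2 = D%:R.
  by apply: ratr_injR; rewrite rmorphXn /= -st sqD2 rmorph_nat.
have := @sqfree_den D (t / D%:R) 1 sqf.
have D0 : (D%:R : rat) != 0 by rewrite pnatr_eq0 -lt0n (leq_trans _ D2).
rewrite expr_div_n tD.
have -> : (D%:R : rat) * (D%:R / D%:R ^+ 2) = 1%:~R by field.
move=> /(_ erefl) /int_of_den.
set z := numq _ => tz.
have : (D%:Z * z ^+ 2 = 1 :> int).
  apply: (@intr_inj rat); rewrite rmorphM rmorphXn /= -tz expr_div_n tD.
  rewrite -pmulrn; field; done.
move=> /(congr1 absz); rewrite abszM /= => /eqP; rewrite muln_eq1 => /andP[/eqP h1 _].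
by move: D2; rewrite h1.
Qed.

Lemma mapQR (P : {poly int}) :
  map_poly (ratr : rat -> R) (pZtoQ P) = map_poly (intr : int -> R) P.
Proof.
rewrite -map_poly_comp; apply: eq_map_poly => z /=; exact: ratr_int.
Qed.

Lemma horner2 (rho : {poly rat}) (y : R) : (size rho <= 2)%N ->
  (map_poly ratr rho).[y] = ratr rho`_0 + ratr rho`_1 * y.
Proof.
move=> hs; rewrite (@horner_coef_wide _ 2); last by rewrite size_map_poly.
by rewrite !big_ord_recl big_ord0 !coef_map /= expr0 mulr1 expr1 addr0.
Qed.

Lemma rat_int_root (P : {poly int}) (p : rat) : P \is monic ->
  root (map_poly (intr : int -> R) P) (ratr p) -> exists z : int, p = z%:~R.
Proof.
move=> mP hr.
have : root (pZtoQ P) p.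
  apply/eqP; apply: ratr_injR; rewrite -horner_map /= mapQR rmorph0; exact/eqP.
rewrite root_factor_theorem => /(monic_dvd_int (monicXsubC _) mP) [m1 hm].
exists (- m1`_0); have := congr1 (fun q : {poly rat} => q`_0) hm.
rewrite /= coef_map /= coefB coefX coefC /= sub0r => /eqP; rewrite eqr_oppLR => /eqP ->.
by rewrite rmorphN.
Qed.

Lemma alg_int_quad (p q : rat) : q != 0 -> alg_int (ratr p + ratr q * s) ->
  exists M N : int, 2 * p = M%:~R /\ p ^+ 2 - D%:R * q ^+ 2 = N%:~R.
Proof.
move=> q0 [P [mP hr]].
set x := ratr p + ratr q * s in hr.
set m : {poly rat} := ('X - p%:P) ^+ 2 - (D%:R * q ^+ 2)%:P.
have sm : size m = 3.
  rewrite /m size_polyDl ?size_exp_XsubC //.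
  by rewrite size_polyN (leq_ltn_trans (size_polyC_leq1 _)).
have mm : m \is monic.
  rewrite monicE /m lead_coefDl ?(monicP (monic_exp _ (monicXsubC _))) //.
  by rewrite size_polyN (leq_ltn_trans (size_polyC_leq1 _)) // size_exp_XsubC.
have mx : (map_poly ratr m).[x] = 0.
  rewrite /m rmorphB /= rmorphXn /= rmorphB /= map_polyX !map_polyC /=.
  rewrite !hornerE /x rmorphM /=.
  have := sqD2; rewrite /s => e.
  rewrite addrAC subrr add0r exprMn e rmorphM rmorph_nat /=; ring.
have : m %| pZtoQ P.
  apply/modp_eq0P; set rho := _ %% m.
  have sz : (size rho <= 2)%N.
    by have := ltn_modpN0 (pZtoQ P) (monic_neq0 mm); rewrite sm.
  have hx : (map_poly ratr rho).[x] = 0.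
    have := congr1 (fun t => (map_poly ratr t).[x]) (divp_eq (pZtoQ P) m).
    rewrite /= rmorphD rmorphM /= hornerD hornerM mx mulr0 add0r -/rho mapQR.
    by move=> <-; exact/eqP.
  move: hx; rewrite horner2 // /x.
  have -> : ratr rho`_0 + ratr rho`_1 * (ratr p + ratr q * s) =
    ratr (rho`_0 + rho`_1 * p) + ratr (rho`_1 * q) * s :> R.
    by rewrite rmorphD !rmorphM /=; ring.
  move=> /irr [h0 /eqP].
  rewrite mulf_eq0 (negPf q0) orbF => /eqP h1.
  rewrite h1 mul0r addr0 in h0.
  apply/polyP => i; rewrite coef0.
  case: i => [|[|i]] //; rewrite nth_default //; exact: leq_trans sz _.
move=> /(monic_dvd_int mm mP) [m1 hm].
exists (- m1`_1), (m1`_0); split.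
  have := congr1 (fun q : {poly rat} => q`_1) hm.
  rewrite /= coef_map /= /m coefB coefC /= subr0 sqrrB !coefE /=.
  rewrite rmorphN /= => <-; rewrite mulr2n; ring.
have := congr1 (fun q : {poly rat} => q`_0) hm.
rewrite /= coef_map /= /m coefB coefC /= sqrrB !coefE /= => <-.
rewrite mulr0n; ring.
Qed.

Lemma alg_int_coords (p q : rat) : alg_int (ratr p + ratr q * s) ->
  exists M N : int, 2 * p = M%:~R /\ p ^+ 2 - D%:R * q ^+ 2 = N%:~R.
Proof.
have [->|q0] := eqVneq q 0; last exact: alg_int_quad.
rewrite rmorph0 mul0r addr0 => [[P [mP hr]]].
have [z ->] := rat_int_root mP hr.
exists (2 * z), (z ^+ 2); split; first by rewrite rmorphM.
by rewrite expr0n /= mulr0 subr0 rmorphXn.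
Qed.
End Quad.
Lemma par1 (D : nat) (M n N : int) : (D %% 4 = 1)%N -> M ^+ 2 - D%:Z * n ^+ 2 = 4 * N ->
  exists k, M - n = 2 * k.
Proof.
move=> hD e.
have hM := divz_eq M 2. have hn := divz_eq n 2.
set a := (M %/ 2)%Z in hM *. set b := (n %/ 2)%Z in hn *.
set e1 := (M %% 2)%Z in hM *. set f1 := (n %% 2)%Z in hn *.
have h1 : (0 <= e1 < 2) by rewrite /e1 modz_ge0 // ltz_pmod.
have h2 : (0 <= f1 < 2) by rewrite /f1 modz_ge0 // ltz_pmod.
have hD' := divn_eq D 4. rewrite hD in hD'.
move: e; rewrite hM hn hD' !expr2.
clearbody a b e1 f1.
have [-> | ->] : e1 = 0 \/ e1 = 1 by lia.
all: have [-> | ->] : f1 = 0 \/ f1 = 1 by lia.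
all: move=> e.
- by exists (a - b); lia.
- lia.
- lia.
- by exists (a - b); lia.
Qed.
Lemma par2 (D : nat) (M n N : int) : (D %% 4 = 2 \/ D %% 4 = 3)%N -> M ^+ 2 - D%:Z * n ^+ 2 = 4 * N ->
  exists k l, M = 2 * k /\ n = 2 * l.
Proof.
move=> hD e.
have hM := divz_eq M 2. have hn := divz_eq n 2.
set a := (M %/ 2)%Z in hM *. set b := (n %/ 2)%Z in hn *.
set e1 := (M %% 2)%Z in hM *. set f1 := (n %% 2)%Z in hn *.
have h1 : (0 <= e1 < 2) by rewrite /e1 modz_ge0 // ltz_pmod.
have h2 : (0 <= f1 < 2) by rewrite /f1 modz_ge0 // ltz_pmod.
have hD' := divn_eq D 4.
move: e; rewrite hM hn hD' !expr2.
clearbody a b e1 f1.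
have [-> | ->] : e1 = 0 \/ e1 = 1 by lia.
all: have [-> | ->] : f1 = 0 \/ f1 = 1 by lia.
all: case: hD => -> e.
all: try by exists a, b; lia.
all: lia.
Qed.

Section Omega.
Variables (R : rcfType) (D : nat).
Hypotheses (D2 : (2 <= D)%N) (sqf : squarefree D).
Local Notation s := (sqD R D).

Definition b1 := (D %% 4 == 1)%N.
Definition om : R := if b1 then (1 + s) / 2 else s.
Definition omc : R := if b1 then (1 - s) / 2 else - s.
Definition c1 : int := if b1 then 1 else 0.
Definition c0 : int := if b1 then (D %/ 4)%:Z else D%:Z.

Lemma D4 : b1 -> (D%:R : R) = (D %/ 4)%:R * 4 + 1.
Proof.
rewrite /b1 => /eqP h.
by rewrite {1}(divn_eq D 4) h natrD natrM.
Qed.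

Lemma om_sq : om ^+ 2 = c1%:~R * om + c0%:~R.
Proof.
have e := sqD2 R D; rewrite /om /c1 /c0; case hb: b1.
  transitivity ((1 + 2 * s + s ^+ 2) / 4); first by field.
  rewrite e (D4 hb) -pmulrn; field; done.
by rewrite e mul0r add0r -pmulrn.
Qed.

Lemma omc_sq : omc ^+ 2 = c1%:~R * omc + c0%:~R.
Proof.
have e := sqD2 R D; rewrite /omc /c1 /c0; case hb: b1.
  transitivity ((1 - 2 * s + s ^+ 2) / 4); first by field.
  rewrite e (D4 hb) -pmulrn; field; done.
by rewrite sqrrN e mul0r add0r -pmulrn.
Qed.

Lemma om_prod : om * omc = - c0%:~R.
Proof.
have e := sqD2 R D; rewrite /omc /om /c0; case hb: b1.
  transitivity ((1 - s ^+ 2) / 4); first by field.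
  rewrite e (D4 hb) -pmulrn; field; done.
by rewrite mulrN -expr2 e -pmulrn.
Qed.

Lemma om_sum : om + omc = c1%:~R.
Proof.
rewrite /omc /om /c1; case hb: b1; last by rewrite subrr.
by rewrite /=; field.
Qed.

Definition p0 : rat := if b1 then 1/2 else 0.
Definition q0 : rat := if b1 then 1/2 else 1.

Lemma om_coords : om = ratr p0 + ratr q0 * s.
Proof.
rewrite /om /p0 /q0; case: b1; last by rewrite rmorph0 rmorph1 add0r mul1r.
by rewrite fmorph_div rmorph1 rmorph_nat /=; field.
Qed.

Lemma omc_coords : omc = ratr p0 - ratr q0 * s.
Proof.
rewrite /omc /p0 /q0; case: b1; last by rewrite rmorph0 rmorph1 sub0r mul1r.
by rewrite fmorph_div rmorph1 rmorph_nat /=; field.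
Qed.

Lemma q0_neq0 : q0 != 0.
Proof. by rewrite /q0; case: b1. Qed.

Lemma coords_uniq (a b a' b' : int) :
  a%:~R + b%:~R * om = a'%:~R + b'%:~R * om :> R -> a = a' /\ b = b'.
Proof.
move=> /eqP; rewrite -subr_eq0 om_coords => /eqP h.
have : ratr ((a - a')%:~R + (b - b')%:~R * p0) + ratr ((b - b')%:~R * q0) * s = 0 :> R.
  rewrite -h rmorphD !rmorphM /= !ratr_int !rmorphB /=; ring.
move=> /(irr D2 sqf) [h1 /eqP]; rewrite mulf_eq0 (negPf q0_neq0) orbF intr_eq0 subr_eq0 => /eqP hb.
move: h1; rewrite hb subrr mul0r addr0 => /eqP; rewrite intr_eq0 subr_eq0 => /eqP //.
Qed.

Definition Zc (y y' : R) := exists a b : int,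
  y = a%:~R + b%:~R * om /\ y' = a%:~R + b%:~R * omc.

Lemma Zc_int (z : int) : Zc z%:~R z%:~R.
Proof. by exists z, 0; rewrite !mul0r !addr0. Qed.

Lemma Zc_add y y' z z' : Zc y y' -> Zc z z' -> Zc (y + z) (y' + z').
Proof.
move=> [a [b [-> ->]]] [a1 [b1' [-> ->]]].
by exists (a + a1), (b + b1'); rewrite !rmorphD /=; split; ring.
Qed.

Lemma Zc_opp y y' : Zc y y' -> Zc (- y) (- y').
Proof.
move=> [a [b [-> ->]]].
by exists (- a), (- b); rewrite !rmorphN /=; split; ring.
Qed.

Lemma Zc_sub y y' z z' : Zc y y' -> Zc z z' -> Zc (y - z) (y' - z').
Proof. by move=> h1 h2; apply: Zc_add h1 (Zc_opp h2). Qed.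

Lemma Zc_mul y y' z z' : Zc y y' -> Zc z z' -> Zc (y * z) (y' * z').
Proof.
move=> [a [b [-> ->]]] [a1 [b1' [-> ->]]].
exists (a * a1 + b * b1' * c0), (a * b1' + b * a1 + b * b1' * c1).
rewrite !rmorphD !rmorphM /=; split.
  transitivity (a%:~R * a1%:~R + (a%:~R * b1'%:~R + b%:~R * a1%:~R) * om + b%:~R * b1'%:~R * om ^+ 2 :> R);
    first by ring.
  rewrite om_sq; ring.
transitivity (a%:~R * a1%:~R + (a%:~R * b1'%:~R + b%:~R * a1%:~R) * omc + b%:~R * b1'%:~R * omc ^+ 2 :> R);
  first by ring.
rewrite omc_sq; ring.
Qed.

Lemma Zc_sym y y' : Zc y y' -> Zc y' y.
Proof.
move=> [a [b [-> ->]]]; exists (a + b * c1), (- b).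
have e := om_sum; rewrite rmorphD rmorphM rmorphN /=; split.
  rewrite -e; ring.
rewrite -e; ring.
Qed.

Lemma Zc_uniq y y1 y2 : Zc y y1 -> Zc y y2 -> y1 = y2.
Proof.
move=> [a [b [-> ->]]] [a' [b' [/coords_uniq [-> ->] ->]]] //.
Qed.

Lemma Zc_norm y y' : Zc y y' -> exists n : int, y * y' = n%:~R.
Proof.
move=> [a [b [-> ->]]]; exists (a ^+ 2 + a * b * c1 - b ^+ 2 * c0).
transitivity (a%:~R ^+ 2 + a%:~R * b%:~R * (om + omc) + b%:~R ^+ 2 * (om * omc) :> R);
  first by ring.
rewrite om_sum om_prod !(rmorphD, rmorphN, rmorphM, rmorphXn) /=; ring.
Qed.


Lemma Zc_inZK y y' : Zc y y' -> inZK D y.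
Proof.
move=> [a [b [ey _]]]; split.
  exists (a%:~R + b%:~R * p0), (b%:~R * q0).
  by rewrite ey om_coords rmorphD !rmorphM /= !ratr_int; ring.
set al := 2 * a + b * c1; set be := a ^+ 2 + a * b * c1 - b ^+ 2 * c0.
exists (('X - al%:P) * 'X + be%:P); split.
  rewrite monicE lead_coefDl ?lead_coefMX ?lead_coefXsubC //.
  rewrite size_mulX ?size_XsubC; last exact: monic_neq0 (monicXsubC _).
  exact: leq_ltn_trans (size_polyC_leq1 _) _.
rewrite /root rmorphD rmorphM /= rmorphB /= map_polyX !map_polyC !hornerE /=.
apply/eqP; rewrite ey /al /be.
transitivity (b%:~R ^+ 2 * (om ^+ 2 - (c1%:~R * om + c0%:~R)) :> R).
  rewrite !(rmorphD, rmorphN, rmorphM, rmorphXn) /=; ring.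
by rewrite om_sq subrr mulr0.
Qed.

Lemma inZK_Zc y : inZK D y -> exists y', Zc y y'.
Proof.
move=> [[p [q ey]] hai]; rewrite ey in hai *.
have [M [N [e1 e2]]] := alg_int_coords D2 sqf hai.
have hd : D%:R * (2 * q) ^+ 2 = (M ^+ 2 - 4 * N)%:~R :> rat.
  rewrite !(rmorphD, rmorphN, rmorphM, rmorphXn) /= -e1 -e2; ring.
have [n en] : exists n : int, 2 * q = n%:~R.
  by exists (numq (2 * q)); apply: int_of_den; apply: sqfree_den sqf hd.
have hi : M ^+ 2 - D%:Z * n ^+ 2 = 4 * N.
  apply: (@intr_inj rat); rewrite !(rmorphD, rmorphN, rmorphM, rmorphXn) /= -en -e1.
  rewrite !rmorph1 -e2 -pmulrn; ring.
have rp : 2 * ratr p = M%:~R :> R.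
  by have := congr1 (ratr : rat -> R) e1; rewrite rmorphM rmorph_nat ratr_int.
have rq : 2 * ratr q = n%:~R :> R.
  by have := congr1 (ratr : rat -> R) en; rewrite rmorphM rmorph_nat ratr_int.
case hb : b1.
  have [k ek] := par1 (elimT eqP hb) hi.
  exists (k%:~R + n%:~R * omc), k, n; split => //.
  have ek' : (M%:~R - n%:~R : R) = 2 * k%:~R.
    by have := congr1 (intr : int -> R) ek; rewrite rmorphB rmorphM.
  rewrite /om hb.
  have -> : ratr p = M%:~R / 2 :> R by rewrite -rp; field.
  have -> : ratr q = n%:~R / 2 :> R by rewrite -rq; field.
  have -> : k%:~R = (M%:~R - n%:~R) / 2 :> R by rewrite ek'; field.
  by field.
have hD : (D %% 4 = 2 \/ D %% 4 = 3)%N.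
  have h4 := ltn_pmod D (isT : (0 < 4)%N).
  have h0 : (D %% 4 != 0)%N.
    apply/negP => /eqP h0; have := sqf (isT : (1 < 2)%N).
    by rewrite (divn_eq D 4) h0 addn0 dvdn_mull.
  have h1 : (D %% 4 != 1)%N by move: hb; rewrite /b1; case: eqP.
  move: h0 h1 h4; set t := (D %% 4)%N; lia.
have [k [l [ek el]]] := par2 hD hi.
exists (k%:~R + l%:~R * omc), k, l; split => //.
rewrite /om hb.
have -> : ratr p = k%:~R :> R.
  by apply: (@mulfI _ 2); rewrite ?pnatr_eq0 // rp ek rmorphM.
have -> : ratr q = l%:~R :> R.
  by apply: (@mulfI _ 2); rewrite ?pnatr_eq0 // rq el rmorphM.
by [].
Qed.

End Omega.


Section Real.
Variable R : rcfType.

Lemma mono_lt (x w : R) : 1 <= x -> x < w -> x + x^-1 < w + w^-1.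
Proof.
move=> x1 xw.
have x0 : 0 < x by lra.
have w0 : 0 < w by lra.
have hx : x * x^-1 = 1 by rewrite mulfV // gt_eqF.
have hw : w * w^-1 = 1 by rewrite mulfV // gt_eqF.
have xi1 : x^-1 <= 1 by rewrite invf_le1.
have wi1 : w^-1 < 1 by rewrite invf_lt1 //; lra.
have xi0 : 0 < x^-1 by rewrite invr_gt0.
have wi0 : 0 < w^-1 by rewrite invr_gt0.
have key : w + w^-1 - (x + x^-1) = (w - x) * (1 - x^-1 * w^-1).
  transitivity (w - x - (w * w^-1) * x^-1 + (x * x^-1) * w^-1); last by ring.
  by rewrite hx hw; ring.
have : 0 < (w - x) * (1 - x^-1 * w^-1).
  apply: mulr_gt0; first lra.
  have : x^-1 * w^-1 < 1 by nra.
  lra.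
lra.
Qed.

Lemma mono_le (x w : R) : 1 <= x -> x <= w -> x + x^-1 <= w + w^-1.
Proof.
move=> x1; rewrite le_eqVlt => /orP [/eqP -> //| xw].
exact/ltW/mono_lt.
Qed.

Lemma gt2 (x : R) : 1 < x -> 2 < x + x^-1.
Proof.
move=> x1; have := @mono_lt 1 x (lexx _) x1; rewrite invr1.
lra.
Qed.
End Real.

Section UD.
Variables (R : rcfType) (D : nat).
Hypotheses (D2 : (2 <= D)%N) (sqf : squarefree D).
Local Notation s := (sqD R D).
Local Notation Zc := (@Zc R D).

Lemma uD_facts (uD : R) : is_uD D uD -> Zc uD uD^-1 /\ 1 < uD.
Proof.
move=> [uf [[[inZ [nz inZinv]] [gt1 _]] hsel]].
have [w hw] := inZK_Zc D2 sqf inZ.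
have [w2 hw2] := inZK_Zc D2 sqf inZinv.
have h1 : w * w2 = 1.
  have := Zc_mul hw hw2; rewrite mulfV // => h.
  by have := Zc_uniq D2 sqf h (Zc_int _ _ 1); rewrite rmorph1.
have [n1 en1] := Zc_norm hw.
have [n2 en2] := Zc_norm hw2.
have n12 : n1 * n2 = 1.
  apply: (@intr_inj R); rewrite rmorphM /= -en1 -en2 rmorph1.
  transitivity ((uf * uf^-1) * (w * w2)); first by ring.
  by rewrite h1 mulfV // mulr1.
have nn : n1 * n1 = 1 := int_unit_sq n12.
have ew : w = n1%:~R * uf^-1.
  by rewrite -en1 mulrC mulrA mulVf // mul1r.
case: hsel => [[_ ->] | [nN ->]].
  split; last by rewrite expr2; nra.
  have := Zc_mul hw hw; rewrite -expr2; congr Zc.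
  rewrite expr2 invfM ew.
  transitivity ((n1 * n1)%:~R * (uf^-1 * uf^-1)); first by rewrite rmorphM /=; ring.
  by rewrite nn rmorph1 mul1r.
split => //.
have n1e : n1 = 1.
  have : n1 = 1 \/ n1 = -1.
    move: nn => /(congr1 absz); rewrite abszM /= => /eqP; rewrite muln_eq1 => /andP[/eqP h _].
    by case: (n1) h => [[|[|k]]|[|k]] //; auto.
  case=> // en; exfalso; apply: nN.
  case: hw => [a [b [ea eb]]].
  exists (a%:~R + b%:~R * p0 D), (b%:~R * q0 D); split.
    by rewrite ea om_coords rmorphD !rmorphM /= !ratr_int; ring.
  apply: (@ratr_injR R).
  rewrite !(rmorphD, rmorphN, rmorphM, rmorphXn) /= !ratr_int rmorph_nat rmorph1.
  have hm : uf * w = -1 by rewrite en1 en rmorphN rmorph1.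
  rewrite ea eb om_coords omc_coords in hm.
  rewrite -(sqD2 R D) -hm; ring.
by rewrite ew n1e rmorph1 mul1r in hw.
Qed.
End UD.

Section Main.
Variables (R : rcfType) (D : nat) (u : R) (d : int) (r : nat).
Hypotheses (D2 : (2 <= D)%N) (sqf : squarefree D).
Local Notation Zc := (@Zc R D).
Hypotheses (hu : Zc u u^-1) (u1 : 1 < u) (r1 : (1 <= r)%N)
  (hd : d%:~R = 1 + u ^+ r + u ^- r).
Local Notation e := (d%:~R : R).
Local Notation W := (u ^+ r).

Lemma u0 : u != 0.
Proof. by rewrite gt_eqF // (lt_trans ltr01 u1). Qed.

Lemma Zc_pow k : Zc (u ^+ k) (u ^- k).
Proof.
elim: k => [|k IH]; first by rewrite expr0 invr1; have := Zc_int R D 1; rewrite rmorph1.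
by rewrite exprS invfM; apply: Zc_mul.
Qed.

Lemma Zc_powV k : Zc (u ^- k) (u ^+ k).
Proof. exact: Zc_sym (Zc_pow k). Qed.

Lemma pow_gt1 k : (0 < k)%N -> 1 < u ^+ k.
Proof. by move=> k0; rewrite exprn_egt1 // -lt0n. Qed.

Lemma powV k : u ^+ k * u ^- k = 1.
Proof. by rewrite mulfV // expf_neq0 // u0. Qed.

Lemma W1 : 1 < W.
Proof. exact: pow_gt1. Qed.

Lemma e3 : 3 < e.
Proof. by rewrite hd; have := gt2 W1; lra. Qed.

Lemma e0 : e != 0.
Proof. by apply: lt0r_neq0; have := e3; lra. Qed.

Lemma conj_of y z (m : int) b : Zc y z -> m%:~R != 0 :> R ->
  Zc (y * m%:~R) b -> z = b / m%:~R.
Proof.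
move=> hz m0 hb.
have := Zc_uniq D2 sqf (Zc_mul hz (Zc_int R D m)) hb => <-.
by rewrite mulfK.
Qed.

Lemma norm_contra y z : Zc y z -> y * z != 0 -> -1 < y * z < 1 -> False.
Proof.
move=> /Zc_norm [n ->]; rewrite intr_eq0 => n0 /andP [h1 h2].
have : 0 < (n + 1)%:~R :> R by rewrite rmorphD rmorph1 /=; lra.
rewrite ltr0z ltrz1 in h2 *; lia.
Qed.

Lemma conj_pow j : inZK D ((u ^+ j - 1) / e) ->
  Zc ((u ^+ j - 1) / e) ((u ^- j - 1) / e).
Proof.
move=> /(inZK_Zc D2 sqf) [z hz].
suff ez : z = (u ^- j - 1) / e by rewrite -ez.
apply: (conj_of hz e0).
rewrite divfK ?e0 //; apply: Zc_sub (Zc_pow j) _.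
by have := Zc_int R D 1; rewrite rmorph1.
Qed.

Lemma Wsum : W + W^-1 = e - 1.
Proof. by rewrite hd; ring. Qed.

Lemma negA j : (0 < j <= r)%N -> ~ inZK D ((u ^+ j - 1) / e).
Proof.
move=> /andP [j0 jr] /conj_pow hz.
set X := u ^+ j.
have X1 : 1 < X := pow_gt1 j0.
have XW : X <= W by rewrite /X ler_eXn2l.
have hX : X * X^-1 = 1 := powV j.
have m := mono_le (ltW X1) XW.
have g2 := gt2 X1.
have ws := Wsum. have E3 := e3.
have ee : (X - 1) / e * ((X^-1 - 1) / e) * (e ^+ 2) = 2 - (X + X^-1).
  transitivity ((X - 1) * (X^-1 - 1) * (e * e^-1) ^+ 2); first by ring.
  rewrite mulfV ?e0 // expr1n mulr1.
  transitivity ((X * X^-1) + 1 - (X + X^-1)); last by rewrite hX.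
  by ring.
have E2 : 9 < e ^+ 2 by nra.
apply: (norm_contra hz).
  set v := (X - 1) / e * ((X^-1 - 1) / e) in ee *.
  clearbody v; clear hz hd hu.
  apply/negP => /eqP v0; rewrite v0 mul0r in ee; lra.
set v := (X - 1) / e * ((X^-1 - 1) / e) in ee *.
clearbody v; clear hz hd hu.
apply/andP; split; nra.
Qed.

Lemma Zc_one : Zc 1 1.
Proof. by have := Zc_int R D 1; rewrite rmorph1. Qed.

Lemma negB j : (r < j < 2 * r)%N -> ~ inZK D ((u ^+ j - 1) / e).
Proof.
move=> /andP [rj j2r] /conj_pow hz.
have [a ea] : exists a, j = (a + r)%N by exists (j - r)%N; rewrite subnK // ltnW.
have a0 : (0 < a)%N by move: rj; rewrite ea; lia.
have ar : (a < r)%N by move: j2r; rewrite ea; lia.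
have hz0 := Zc_add (Zc_mul (Zc_powV r) hz) Zc_one.
move: hz0; rewrite ea exprD invfM.
set X := u ^+ a; set Wi := W^-1.
have X1 : 1 < X := pow_gt1 a0.
have XW : X < W by rewrite /X ltr_eXn2l.
have hX : X * X^-1 = 1 := powV a.
have hW : W * Wi = 1 := powV r.
have W1' := W1.
have Wi0 : 0 < Wi by rewrite invr_gt0; lra.
have Xi0 : 0 < X^-1 by rewrite invr_gt0; lra.
have m1 : X + X^-1 < W + Wi := mono_lt (ltW X1) XW.
have m2 : W * X^-1 + X * Wi <= W + Wi.
  have -> : X * Wi = (W * X^-1)^-1 by rewrite invfM invrK mulrC.
  apply: mono_le.
    by rewrite ler_pdivlMr ?mul1r; lra.
  rewrite ler_pdivrMr //; nra.
have m3 : W + Wi < W ^+ 2 + Wi ^+ 2.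
  rewrite /Wi exprVn; apply: mono_lt; first lra.
  by rewrite expr2; nra.
have E3 := e3.
have he : e = 1 + W + Wi by rewrite hd.
have ee := e0.
have eA : (Wi * ((X * W - 1) / e) + 1) * e = X + 1 + W.
  transitivity (Wi * (X * W - 1) * (e^-1 * e) + e); first by ring.
  rewrite mulVf // mulr1 he.
  transitivity (X * (W * Wi) + 1 + W); first by ring.
  by rewrite hW mulr1.
have eB : (W * ((X^-1 * Wi - 1) / e) + 1) * e = X^-1 + 1 + Wi.
  transitivity (W * (X^-1 * Wi - 1) * (e^-1 * e) + e); first by ring.
  rewrite mulVf // mulr1 he.
  transitivity (X^-1 * (W * Wi) + 1 + Wi); first by ring.
  by rewrite hW mulr1.
move: eA eB => /[swap].
set A := Wi * ((X * W - 1) / e) + 1; set B := W * ((X^-1 * Wi - 1) / e) + 1.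
move=> eB eA.
have hv : (A * B) * e ^+ 2 = (X + 1 + W) * (X^-1 + 1 + Wi).
  by rewrite -eA -eB; ring.
have P1 : (X + 1 + W) * (X^-1 + 1 + Wi) = 3 + X + X^-1 + W + Wi + X * Wi + W * X^-1.
  transitivity (X * X^-1 + W * Wi + 1 + X + X^-1 + W + Wi + X * Wi + W * X^-1); first by ring.
  by rewrite hX hW; ring.
have P2 : e ^+ 2 = 3 + W ^+ 2 + Wi ^+ 2 + 2 * W + 2 * Wi.
  rewrite he; transitivity (1 + W ^+ 2 + Wi ^+ 2 + 2 * W + 2 * Wi + 2 * (W * Wi)); first by ring.
  by rewrite hW; ring.
have Ppos : 0 < (X + 1 + W) * (X^-1 + 1 + Wi).
  by apply: mulr_gt0; lra.
have E9 : 9 < e ^+ 2 by nra.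
move=> hz0; apply: (norm_contra hz0).
  clearbody A B; clear hz hz0 hd hu ea.
  apply/negP => /eqP v0; rewrite v0 mul0r in hv; lra.
clearbody A B; clear hz hz0 hd hu ea.
set P := (X + 1 + W) * _ in hv P1 Ppos.
set v := A * B in hv *.
have PE : P < e ^+ 2 by rewrite P2 P1; lra.
move: hv PE E9 Ppos; set E := e ^+ 2; clearbody P v E => hv PE E9 Ppos.
apply/andP; split; nra.
Qed.

Local Notation P := (W * (W - 1)).

Lemma ZcP : Zc P (W^-1 * (W^-1 - 1)).
Proof. exact: Zc_mul (Zc_pow r) (Zc_sub (Zc_pow r) Zc_one). Qed.

Lemma Pe : P * e = W ^+ 3 - 1.
Proof.
have hW : W * W^-1 = 1 := powV r.
rewrite hd; transitivity (W ^+ 3 + (W * W^-1) * (W - 1) - W); first by ring.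
by rewrite hW; ring.
Qed.

Lemma negC j : (2 * r <= j < 3 * r)%N -> ~ inZK D ((u ^+ j - 1) / e).
Proof.
move=> /andP [j2 j3] /(inZK_Zc D2 sqf) [z hz].
have [b eb] : exists b, (3 * r = j + b)%N by exists (3 * r - j)%N; rewrite subnKC // ltnW.
have b0 : (0 < b)%N by lia.
have br : (b <= r)%N by lia.
apply: (negA (j := b)); first by rewrite b0 br.
have := Zc_sub (Zc_mul (Zc_powV j) ZcP) (Zc_mul (Zc_powV j) hz).
move=> /Zc_inZK.
suff -> : u ^- j * P - u ^- j * ((u ^+ j - 1) / e) = (u ^+ b - 1) / e by [].
have hY : u ^+ j * u ^- j = 1 := powV j.
have YX : u ^+ j * u ^+ b = W ^+ 3 by rewrite -exprD -eb -exprM mulnC.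
have ee := e0.
apply: (mulIf ee); rewrite divfK //.
transitivity (u ^- j * (P * e) - u ^- j * (u ^+ j - 1) * (e^-1 * e)); first by ring.
rewrite mulVf // mulr1 Pe -YX.
transitivity ((u ^+ j * u ^- j) * u ^+ b - u ^+ j * u ^- j); first by ring.
by rewrite hY mul1r.
Qed.

Lemma negOdd j : (0 < j < 3 * r)%N -> ~ inZK D ((u ^+ j - 1) / e).
Proof.
move=> /andP [j0 j3].
have [jr | rj] := leqP j r; first by apply: negA; rewrite j0 jr.
have [j2 | j2] := ltnP j (2 * r); first by apply: negB; rewrite rj j2.
by apply: negC; rewrite j2 j3.
Qed.

Lemma posOdd : inZK D ((u ^+ (3 * r) - 1) / e).
Proof.
have -> : (u ^+ (3 * r) - 1) / e = P by rewrite mulnC exprM -Pe mulfK // e0.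
exact: Zc_inZK ZcP.
Qed.

Lemma u3r : u ^+ (3 * r) = W ^+ 3.
Proof. by rewrite mulnC exprM. Qed.

Lemma posEven f : d = 2 * f -> inZK D ((u ^+ (6 * r) - 1) / (2 * e)).
Proof.
move=> df.
have hf : e = 2 * f%:~R by rewrite df rmorphM.
have -> : (u ^+ (6 * r) - 1) / (2 * e) = P * (f%:~R * P + 1).
  have ee := e0.
  have t0 : (2 : R) != 0 by rewrite pnatr_eq0.
  apply: (mulIf (mulf_neq0 t0 ee)).
  rewrite divfK ?mulf_neq0 //.
  have -> : u ^+ (6 * r) = (W ^+ 3) ^+ 2 by rewrite -!exprM; congr (u ^+ _); lia.
  symmetry; transitivity ((P * e) * ((P * (2 * f%:~R)) + 2)); first by ring.
  by rewrite -hf Pe; ring.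
apply: Zc_inZK.
exact: Zc_mul ZcP (Zc_add (Zc_mul (Zc_int R D f) ZcP) Zc_one).
Qed.

Lemma negEven f j : d = 2 * f -> (0 < j < 6 * r)%N ->
  ~ inZK D ((u ^+ j - 1) / (2 * e)).
Proof.
move=> df /andP [j0 j6] /(inZK_Zc D2 sqf) [z hz].
have ee := e0.
have t0 : (2 : R) != 0 by rewrite pnatr_eq0.
have h2 : Zc ((u ^+ j - 1) / e) (z * 2).
  have := Zc_mul hz (Zc_int R D 2); congr Zc.
  by rewrite rmorph_nat; field.
have [j3 | j3] := ltnP j (3 * r).
  by apply: (negOdd (j := j)); [rewrite j0 j3 | exact: Zc_inZK h2].
move: j3; rewrite leq_eqVlt => /orP [/eqP j3 | j3].
  rewrite -j3 u3r in hz.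
  have ht := Zc_mul (Zc_powV r) hz.
  have tv : W^-1 * ((W ^+ 3 - 1) / (2 * e)) = (W - 1) / 2.
    have hW : W * W^-1 = 1 := powV r.
    rewrite -Pe.
    transitivity ((W * W^-1) * (W - 1) / 2 * (e / e)); first by rewrite invfM; ring.
    by rewrite hW divff // mul1r mulr1.
  rewrite tv in ht.
  have hc : Zc ((W - 1) / 2 * 2%:~R) (W^-1 - 1).
    rewrite (_ : (W - 1) / 2 * 2%:~R = W - 1); first exact: Zc_sub (Zc_pow r) Zc_one.
    by rewrite rmorph_nat; field.
  have := conj_of ht _ hc; rewrite rmorph_nat => /(_ t0) ez.
  rewrite ez in ht.
  have [n en] := Zc_norm ht.
  have : (4 * n = 3 - d :> int).
    apply: (@intr_inj R); rewrite rmorphM rmorphB /= -en.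
    have hW : W * W^-1 = 1 := powV r.
    rewrite rmorph_nat hd.
    transitivity (W * W^-1 + 1 - (W + W^-1)); last by rewrite hW; ring.
    transitivity ((W - 1) * (W^-1 - 1) * (4 * (2^-1 * 2^-1))); first by ring.
    rewrite (_ : 4 * (2^-1 * 2^-1) = 1 :> R); last by rewrite -invfM -natrM divff // pnatr_eq0.
    by rewrite mulr1; ring.
  rewrite df; lia.
have [b eb] : exists b, j = (3 * r + b)%N by exists (j - 3 * r)%N; rewrite subnKC // ltnW.
have b0 : (0 < b)%N by lia.
have b3 : (b < 3 * r)%N by lia.
apply: (negOdd (j := b)); first by rewrite b0 b3.
have := Zc_mul (Zc_powV (3 * r)) (Zc_sub h2 ZcP).
move=> /Zc_inZK.
suff -> : u ^- (3 * r) * ((u ^+ j - 1) / e - P) = (u ^+ b - 1) / e by [].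
apply: (mulIf ee); rewrite divfK //.
have hY : u ^+ (3 * r) * u ^- (3 * r) = 1 := powV (3 * r).
transitivity (u ^- (3 * r) * (u ^+ j - 1) * (e / e) - u ^- (3 * r) * (P * e)); first by ring.
rewrite Pe divff // mulr1 -u3r eb exprD.
transitivity ((u ^+ (3 * r) * u ^- (3 * r)) * u ^+ b - u ^+ (3 * r) * u ^- (3 * r)); first by ring.
by rewrite hY mul1r.
Qed.
End Main.

Unset Implicit Arguments.

Theorem mainTheorem6 (R : rcfType) (D : nat) (uD : R) (r : nat) (d : int) :
  (2 <= D)%N -> squarefree D -> is_uD D uD -> (1 <= r)%N ->
  d%:~R = 1 + uD ^+ r + uD ^- r ->
  let d' := if odd `|d|%N then d else 2 * d in
  mod_order D uD d' (if odd `|d|%N then 3 * r else 6 * r)%N.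
Proof.
move=> D2 sqf huD r1 hd d'.
have [hu u1] := uD_facts D2 sqf huD.
rewrite /d' /mod_order /congZK; case: ifP => ho.
  split; first by rewrite muln_gt0.
  split; first exact: posOdd hu u1 r1 hd.
  by move=> j j0 j3; apply: (negOdd D2 sqf hu u1 r1 hd); rewrite j0 j3.
have [f df] : exists f, d = 2 * f.
  have : (2 %| d)%Z by rewrite dvdzE /= dvdn2 ho.
  by move=> /dvdzP [f ->]; exists f; rewrite mulrC.
have e2 : ((2 * d)%:~R : R) = 2 * d%:~R by rewrite rmorphM.
split; first by rewrite muln_gt0.
split; first by rewrite e2; exact: posEven D2 hu u1 r1 hd f df.
move=> j j0 j6; rewrite e2; apply: (negEven D2 sqf hu u1 r1 hd df).
by rewrite j0 j6.
Qed.
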